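(* Let $k\ge2$ and $\varepsilon>0$, and let $K$, the sets $C_x$ and the map $\Phi_\varepsilon$ be as defined in the context. Let $\mathbf{q}^\ast=\Phi_\varepsilon(\mathbf{U}_k)$, where $\mathbf{U}_k$ is the uniform distribution on $[k]$. Then $\|\mathbf{q}^\ast\|_2^2=O(1/K)$, with an absolute implied constant.
   Context: Generalised Hadamard Response with parameter $\varepsilon>0$ on $[k]$: $a=2^{\lfloor\log_2\min(e^{\varepsilon},2k)\rfloor}$, $b=2^{\lceil\log_2(k/a+1)\rceil}$, $K=ab$, $s=b/2$. Let $H_b$ be the $b\times b$ Sylvester Hadamard matrix and $P_b$ the $b\times b$ all-$(-1)$ matrix; $\bar H_{a,b}\in\{-1,1\}^{K\times K}$ is the $a\times a$ block matrix with $H_b$ on the diagonal blocks and $P_b$ in all off-diagonal blocks. The $a(b-1)\ge k$ rows of $\bar H_{a,b}$ that are not the first row of a diagonal copy of $H_b$ each have exactly $s$ entries $+1$; each $x\in[k]$ is mapped to a distinct such row, and $C_x\subseteq[K]$ is the set of columns where that row equals $+1$. For a distribution $\mathbf{p}$ on $[k]$, $\Phi_\varepsilon(\mathbf{p})$ is the distribution on $[K]$ given by $\Phi_\varepsilon(\mathbf{p})(y)=\frac{1}{se^\varepsilon+K-s}\big((e^\varepsilon-1)\sum_{x\in[k]}\mathbf{p}(x)\mathbf{1}\{y\in C_x\}+1\big)$. *)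

(* Defs.v *)
From mathcomp Require Import all_boot all_order all_algebra.
From mathcomp Require Import all_classical all_reals all_analysis.
Set Implicit Arguments. Unset Strict Implicit. Unset Printing Implicit Defensive.
Import Order.TTheory GRing.Theory Num.Theory.
Local Open Scope ring_scope.

Section GHR.
Variable R : realType.

Definition log2r (x : R) : R := ln x / ln 2.

Definition gh_la (k : nat) (eps : R) : nat :=
  absz (Num.floor (log2r (Num.min (expR eps) (2 * k%:R)))).
Definition gh_a (k : nat) (eps : R) : nat := (2 ^ gh_la k eps)%N.

Definition gh_lb (k : nat) (eps : R) : nat :=
  absz (Num.ceil (log2r (k%:R / (gh_a k eps)%:R + 1))).
Definition gh_b (k : nat) (eps : R) : nat := (2 ^ gh_lb k eps)%N.

Definition gh_K (k : nat) (eps : R) : nat := (gh_a k eps * gh_b k eps)%N.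
Definition gh_s (k : nat) (eps : R) : nat := (gh_b k eps %/ 2)%N.
End GHR.

(* Sylvester Hadamard matrix H_{2^m}, entry (i,j) for i,j < 2^m;
   true encodes +1, false encodes -1.
   H_1 = [1],  H_{2h} = [[H_h, H_h], [H_h, -H_h]]. *)
Fixpoint sylv (m : nat) (i j : nat) : bool :=
  match m with
  | 0 => true
  | m'.+1 =>
      let h := (2 ^ m')%N in
      xorb ((h <= i) && (h <= j))%N (sylv m' (i %% h) (j %% h))
  end.

(* \bar H_{a,b} with b = 2^m: a x a block matrix, H_b on diagonal blocks,
   all -1 off the diagonal.  Entry (r, c) for r, c < a*b; true = +1. *)
Definition barH (m : nat) (r c : nat) : bool :=
  if (r %/ 2 ^ m == c %/ 2 ^ m)%N then sylv m (r %% 2 ^ m) (c %% 2 ^ m)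
  else false.

(* Phi_eps(p)(y), for an encoding f : [k] -> rows of \bar H_{a,b}
   (C_x = { y | barH (f x) y = +1 }). *)
Definition Phi (R : realType) (k : nat) (eps : R) (f : 'I_k -> nat)
    (p : 'I_k -> R) (y : nat) : R :=
  ((expR eps - 1) * (\sum_(x < k) p x * (barH (gh_lb k eps) (f x) y)%:R) + 1)
  / ((gh_s k eps)%:R * expR eps + (gh_K k eps)%:R - (gh_s k eps)%:R).

Definition unif (R : realType) (k : nat) : 'I_k -> R := fun _ => k%:R^-1.

(* Main.v *)
Require Import Defs.
From mathcomp Require Import all_boot all_order all_algebra.
From mathcomp Require Import all_classical all_reals all_analysis.
From mathcomp Require Import zify ring lra.
Import Order.TTheory GRing.Theory Num.Theory.
Local Open Scope ring_scope.

Lemma ln2_gt0 (R : realType) : 0 < ln (2 : R).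
Proof. by apply: ln_gt0; rewrite ltr1n. Qed.

Lemma ln_pow2 (R : realType) (n : nat) : ln ((2 ^ n)%:R : R) = n%:R * ln 2.
Proof. by rewrite natrX lnXn ?ltr0n // mulr_natl. Qed.

Lemma gh_a_le (R : realType) (k : nat) (eps : R) :
  (2 <= k)%N -> 0 < eps -> (gh_a k eps <= 2 * k)%N.
Proof.
move=> hk he.
set m := Num.min (expR eps) (2 * k%:R).
have m1 : 1 <= m.
  rewrite le_min; apply/andP; split; first by rewrite ltW // expR_gt1.
  rewrite -natrM ler1n; lia.
have mle : m <= 2 * k%:R by rewrite ge_min lexx orbT.
have l2 := ln2_gt0 R.
have t0 : 0 <= log2r m.
  by rewrite /log2r; apply: divr_ge0; [apply: ln_ge0|apply: ltW].
have z0 : 0 <= Num.floor (log2r m) by rewrite floor_ge0.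
have hla : (gh_la k eps)%:R = (Num.floor (log2r m))%:~R :> R.
  by rewrite /gh_la -/m natr_absz ger0_norm.
have : ((gh_a k eps)%:R : R) <= m.
  have mp : 0 < m by apply: lt_le_trans m1.
  rewrite -ler_ln ?posrE ?ltr0n ?expn_gt0 //.
  rewrite /gh_a ln_pow2 hla.
  have := floor_le (log2r m); rewrite /log2r => h.
  by rewrite -(ler_pM2r l2) in h; rewrite (le_trans h) // divfK // gt_eqF.
move=> h; have : ((gh_a k eps)%:R : R) <= (2 * k)%:R by rewrite natrM (le_trans h).
by rewrite ler_nat.
Qed.

Lemma gh_b_facts (R : realType) (k : nat) (eps : R) :
  (2 <= k)%N -> 0 < eps ->
  (0 < gh_lb k eps)%N /\
  ((gh_b k eps)%:R : R) < 2 * ((k%:R / (gh_a k eps)%:R) + 1).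
Proof.
move=> hk he.
have a0 : (0 < gh_a k eps)%N by rewrite /gh_a expn_gt0.
set y := k%:R / (gh_a k eps)%:R + 1.
have y1 : 1 < y.
  rewrite /y ltrDr divr_gt0 // ltr0n //; lia.
have y0 : 0 < y by apply: lt_trans y1.
have l2 := ln2_gt0 R.
have t0 : 0 < log2r y by rewrite /log2r divr_gt0 // ln_gt0.
have c0 : 0 < Num.ceil (log2r y) by rewrite ceil_gt0.
have hlb : (gh_lb k eps)%:R = (Num.ceil (log2r y))%:~R :> R.
  by rewrite /gh_lb -/y natr_absz ger0_norm // ltW.
split.
  by rewrite /gh_lb -/y absz_gt0 gt_eqF.
rewrite -ltr_ln ?posrE ?ltr0n ?expn_gt0 ?mulr_gt0 //.
rewrite /gh_b ln_pow2 hlb lnM ?posrE // addrC.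
have := ceilB1_lt (log2r y); rewrite intrB /log2r => h.
have h2 : (Num.ceil (ln y / ln 2))%:~R < ln y / ln 2 + 1 by rewrite -ltrBlDr.
rewrite -(ltr_pM2r l2) in h2.
by rewrite (lt_le_trans h2) // mulrDl divfK ?gt_eqF // mul1r.
Qed.

Lemma cnt_le (k : nat) (f : 'I_k -> nat) (m y : nat) : injective f ->
  (#|[pred x | barH m (f x) y]| <= 2 ^ m)%N.
Proof.
move=> finj.
have b0 : (0 < 2 ^ m)%N by rewrite expn_gt0.
pose g (x : 'I_k) : 'I_(2 ^ m) := Ordinal (ltn_pmod (f x) b0).
rewrite -[X in (_ <= X)%N]card_ord.
apply: (leq_card_in g) => x1 x2; rewrite !inE /barH.
case: eqP => // e1 _; case: eqP => // e2 _ /(congr1 val) /= e3.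
apply: finj; rewrite (divn_eq (f x1) (2 ^ m)) (divn_eq (f x2) (2 ^ m)).
by rewrite e1 e2 e3.
Qed.

Lemma sum_barH (R : realType) (k : nat) (f : 'I_k -> nat) (m y : nat) :
  injective f ->
  \sum_(x < k) ((barH m (f x) y)%:R : R) <= (2 ^ m)%:R.
Proof.
move=> finj; rewrite -natr_sum ler_nat.
apply: leq_trans (@cnt_le k f m y finj).
rewrite -sum1_card [X in (_ <= X)%N]big_mkcond /=.
apply: eq_leq; apply: eq_bigr => i _; rewrite inE; by case: barH.
Qed.

Theorem lemma4p5 :
  exists C : nat,
  forall (R : realType) (k : nat) (eps : R) (f : 'I_k -> nat),
    (2 <= k)%N -> 0 < eps ->
    injective f ->
    (forall x, f x < gh_K k eps)%N ->
    (forall x, f x %% gh_b k eps != 0)%N ->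
    \sum_(y < gh_K k eps) (Phi eps f (@unif R k) y) ^+ 2
      <= C%:R / (gh_K k eps)%:R.
Proof.
exists 144%N => R k eps f hk he finj _ _.
have ha := @gh_a_le R k eps hk he.
have [lb0 hb] := @gh_b_facts R k eps hk he.
have bs : gh_b k eps = (2 * gh_s k eps)%N.
  rewrite /gh_s /gh_b; case: (gh_lb k eps) lb0 => // n _.
  by rewrite expnS mulKn.
have a0 : (0 < gh_a k eps)%N by rewrite /gh_a expn_gt0.
have K0 : (0 < gh_K k eps)%N by rewrite /gh_K muln_gt0 a0 /gh_b expn_gt0.
have k0 : (0 : R) < k%:R by rewrite ltr0n; lia.
have Kle : ((gh_K k eps)%:R : R) <= 6 * k%:R.
  have ha' : ((gh_a k eps)%:R : R) <= 2 * k%:R by rewrite -natrM ler_nat.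
  have a0' : (0 : R) < (gh_a k eps)%:R by rewrite ltr0n.
  rewrite /gh_K natrM.
  have -> : (6 * k%:R : R) = (gh_a k eps)%:R * (2 * (k%:R / (gh_a k eps)%:R + 1)) + (4 * k%:R - 2 * (gh_a k eps)%:R).
    by field; rewrite gt_eqF.
  rewrite -[X in X <= _]addr0 lerD //; last by lra.
  by rewrite ler_pM2l // ltW.
set K := gh_K k eps in K0 Kle *.
set s := gh_s k eps in bs *.
have E1 : 0 < expR eps - 1 by rewrite subr_gt0 expR_gt1.
have pt : forall y, 0 <= Phi eps f (@unif R k) y <= 12 / K%:R.
  move=> y; rewrite /Phi /unif -big_distrr /= -/s -/K.
  have hn := @sum_barH R k f (gh_lb k eps) y finj.
  rewrite -/(gh_b k eps) bs natrM in hn.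
  set n := \sum_(x < k) _ in hn *.
  have n0 : 0 <= n by apply: sumr_ge0 => i _; apply: ler0n.
  set S := (s%:R : R) in hn *.
  have S0 : 0 <= S by apply: ler0n.
  have D0 : 0 < S * expR eps + K%:R - S.
    have : (0:R) < K%:R by rewrite ltr0n.
    have : 0 <= S * (expR eps - 1) by rewrite mulr_ge0 // ltW.
    lra.
  have kn : k%:R^-1 * n * K%:R <= 12 * S.
    rewrite [_^-1 * n]mulrC mulrAC ler_pdivrMr //.
    have : n * K%:R <= (2 * S) * (6 * k%:R) by rewrite ler_pM // ler0n.
    lra.
  apply/andP; split.
    apply: divr_ge0; last exact: ltW.
    by rewrite addr_ge0 // mulr_ge0 ?(ltW E1) // mulr_ge0 // invr_ge0 ler0n.
  rewrite ler_pdivrMr // mulrAC ler_pdivlMr ?ltr0n //.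
  have : (expR eps - 1) * (k%:R^-1 * n * K%:R) <= (expR eps - 1) * (12 * S).
    by rewrite ler_pM2l.
  have : (1 : R) <= K%:R by rewrite ler1n.
  nra.
apply: le_trans (_ : \sum_(y < K) (12 / K%:R) ^+ 2 <= _).
  apply: ler_sum => y _; have /andP[p0 p1] := pt y.
  by rewrite ler_pXn2r // ?nnegrE // (le_trans p0).
rewrite sumr_const card_ord.
have : (K%:R : R) != 0 by rewrite pnatr_eq0 -lt0n.
move=> Kn; rewrite -[_ *+ K]mulr_natl le_eqVlt; apply/orP; left; apply/eqP; by field.
Qed.
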